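(* Let $r \geq 3$ and $n \geq r+1$ be integers. The index $\lambda_1(\Gamma_{1,r-2})$ is the largest root of the polynomial $$f(x) = x^3 + (3-n)x^2 + (3-n-r)x + (n+4)r - (r^2+n+7),$$ and it satisfies $$n-2 \leq \lambda_1(\Gamma_{1,r-2}) < n-1.$$
   Context: A signed graph is a simple graph with each edge assigned a sign $+1$ or $-1$; its adjacency matrix has entry $\sigma(v_iv_j)$ for adjacent $v_i,v_j$ and $0$ otherwise, and its index $\lambda_1$ is the largest eigenvalue of this matrix. $\Gamma_{1,r-2}$ denotes the signed graph on vertices $v_1,\dots,v_n$ obtained from the all-positive complete graph on $\{v_2,\dots,v_n\}$ by adding the vertex $v_1$ joined by one negative edge $v_1v_2$ and by $r-2$ positive edges $v_1v_3,\dots,v_1v_r$ (and no other edges at $v_1$). *)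

(* Defs.v *)
From HB Require Import structures.
From mathcomp Require Import all_boot all_order all_algebra.
Set Implicit Arguments. Unset Strict Implicit. Unset Printing Implicit Defensive.
Import Order.TTheory GRing.Theory Num.Theory.
Local Open Scope ring_scope.

(* Vertices v_1, ..., v_n are the indices 0, ..., n-1 of 'I_n
   (v_k corresponds to index k-1).
   Gamma_{1,r-2}: all-positive complete graph on {v_2..v_n} (indices 1..n-1),
   plus v_1 (index 0) joined negatively to v_2 (index 1) and positively to
   v_3..v_r (indices 2..r-1), and to nothing else. *)
Definition Gamma_adj (R : ringType) (n r : nat) : 'M[R]_n :=
  \matrix_(i < n, j < n)
    if i == j then 0
    else if minn i j == 0%N then
      (if maxn i j == 1%N then -1
       else if (maxn i j < r)%N then 1 else 0)
    else 1.

Definition is_index (R : realFieldType) (n : nat) (A : 'M[R]_n) (lam : R) : Prop :=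
  eigenvalue A lam /\ (forall mu : R, eigenvalue A mu -> mu <= lam).

Definition f_poly (R : ringType) (n r : nat) : {poly R} :=
  'X^3 + (3 - n%:R)%:P * 'X^2 + (3 - n%:R - r%:R)%:P * 'X
  + ((n%:R + 4) * r%:R - (r%:R ^+ 2 + n%:R + 7))%:P.

(* Main.v *)
Require Import Defs.
From HB Require Import structures.
From mathcomp Require Import all_boot all_order all_algebra.
From mathcomp Require Import ring lra zify.
Import Order.TTheory GRing.Theory Num.Theory.
Local Open Scope ring_scope.

Definition Aent (R : ringType) (r : nat) (i j : nat) : R :=
    if i == j then 0
    else if minn i j == 0%N then
      (if maxn i j == 1%N then -1
       else if (maxn i j < r)%N then 1 else 0)
    else 1.

Section S.
Variables (R : rcfType) (n r : nat).
Hypotheses (hr : (3 <= r)%N) (hrn : (r + 1 <= n)%N).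

Lemma mulA (x : nat -> R) (j : 'I_n) :
  ((\row_(k < n) x k) *m Gamma_adj R n r) 0 j
  = \sum_(0 <= i < n) x i * Aent R r i j.
Proof.
rewrite mxE big_mkord; apply: eq_bigr => i _; by rewrite !mxE.
Qed.

Lemma A_i0 i : (2 <= i)%N -> Aent R r i 0 = if (i < r)%N then 1 else 0.
Proof.
move=> hi; rewrite /Aent minn0 maxn0 eqxx.
have -> : (i == 0%N) = false by lia.
by have -> : (i == 1%N) = false by lia.
Qed.

Lemma A_i1 i : (2 <= i)%N -> Aent R r i 1 = 1.
Proof.
move=> hi; rewrite /Aent.
have -> : (i == 1%N) = false by lia.
by have -> : (minn i 1 == 0%N) = false by lia.
Qed.

Lemma A_ij i j : (2 <= i)%N -> (2 <= j)%N -> Aent R r i j = if i == j then 0 else 1.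
Proof.
move=> hi hj; rewrite /Aent; case: (i == j) => //.
by have -> : (minn i j == 0%N) = false by lia.
Qed.

Lemma A_0j j : (2 <= j)%N -> Aent R r 0 j = if (j < r)%N then 1 else 0.
Proof.
move=> hj; rewrite /Aent min0n max0n eqxx.
have -> : (0 == j)%N = false by lia.
by have -> : (j == 1%N) = false by lia.
Qed.

Lemma A_1j j : (2 <= j)%N -> Aent R r 1 j = 1.
Proof.
move=> hj; rewrite /Aent.
have -> : (1 == j)%N = false by lia.
by have -> : (minn 1 j == 0%N) = false by lia.
Qed.

Lemma A_00 : Aent R r 0 0 = 0. Proof. by []. Qed.
Lemma A_11 : Aent R r 1 1 = 0. Proof. by []. Qed.
Lemma A_01 : Aent R r 0 1 = -1. Proof. by []. Qed.
Lemma A_10 : Aent R r 1 0 = -1. Proof. by []. Qed.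

Lemma sum_hole (x : nat -> R) m k j : (m <= j < k)%N ->
  \sum_(m <= i < k) x i * (if i == j then 0 else 1) = \sum_(m <= i < k) x i - x j.
Proof.
move=> hj.
rewrite (eq_bigr (fun i => x i - (if i == j then x i else 0))); last first.
  by move=> i _; case: (i == j); rewrite ?mulr0 ?mulr1 ?subrr ?subr0.
by rewrite sumrB -big_mkcond big_nat1_eq hj.
Qed.

Lemma col0 (x : nat -> R) :
  \sum_(0 <= i < n) x i * Aent R r i 0 = - x 1%N + \sum_(2 <= i < r) x i.
Proof.
rewrite big_ltn; last by lia.
rewrite big_ltn; last by lia.
rewrite A_00 A_10 mulr0 add0r mulrN1; congr (_ + _).
rewrite (big_cat_nat (n := r)) /=; [|lia|lia].
rewrite [X in _ + X]big1_seq ?addr0; last first.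
  move=> i /andP [_]; rewrite mem_index_iota => hi.
  rewrite A_i0; last by lia.
  by rewrite ltnNge (andP hi).1 mulr0.
apply: eq_big_nat => i hi; rewrite A_i0; last by lia.
by rewrite (andP hi).2 mulr1.
Qed.

Lemma col1 (x : nat -> R) :
  \sum_(0 <= i < n) x i * Aent R r i 1 = - x 0%N + \sum_(2 <= i < n) x i.
Proof.
rewrite big_ltn; last by lia.
rewrite big_ltn; last by lia.
rewrite A_01 A_11 mulr0 add0r mulrN1; congr (_ + _).
by apply: eq_big_nat => i hi; rewrite A_i1 ?mulr1 // (andP hi).1.
Qed.

Lemma colj (x : nat -> R) (j : nat) : (2 <= j < n)%N ->
  \sum_(0 <= i < n) x i * Aent R r i j =
  (if (j < r)%N then x 0%N else 0) + x 1%N + \sum_(2 <= i < n) x i - x j.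
Proof.
move=> hj.
rewrite big_ltn; last by lia.
rewrite big_ltn; last by lia.
rewrite A_0j; last by lia.
rewrite A_1j; last by lia.
rewrite (eq_big_nat _ _ (F2 := fun i => x i * (if i == j then 0 else 1))); last first.
  by move=> i hi; rewrite A_ij //; lia.
rewrite sum_hole; last by lia.
by case: (j < r)%N; rewrite ?mulr1 ?mulr0 ?add0r ?addrA.
Qed.

Lemma sum_const (x : nat -> R) c m k : (forall i, (m <= i < k)%N -> x i = c) ->
  \sum_(m <= i < k) x i = c *+ (k - m).
Proof. by move=> h; rewrite (eq_big_nat _ _ h) sumr_const_nat. Qed.


Lemma fE x : (f_poly R n r).[x] =
  (x - n%:R + 2) * (x ^+ 2 + x - r%:R + 1) - (r%:R - 3) ^+ 2.
Proof. rewrite /f_poly !(hornerD, hornerM, hornerC, hornerXn, hornerX); ring. Qed.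

Lemma hN : (4 : R) <= n%:R.
Proof. have h : (4 <= n)%N by lia. by rewrite ler_nat. Qed.
Lemma hR : (3 : R) <= r%:R.
Proof. by rewrite ler_nat. Qed.
Lemma hRN : (r%:R + 1 : R) <= n%:R.
Proof. by move: hrn; rewrite -(ler_nat R) natrD. Qed.

Lemma fmono x y : n%:R - 2 <= x -> x < y -> (f_poly R n r).[x] < (f_poly R n r).[y].
Proof.
move=> hx hxy; rewrite !fE.
have := hN; have := hR; have := hRN => h1 h2 h3.
set N := n%:R in hx h1 h2 h3 *; set Rr := r%:R in h1 h2 h3 *.
have hh : 0 < x ^+ 2 + x - Rr + 1 by nra.
have hd : 0 < y - x by lra.
have hs : 0 <= x - N + 2 by lra.
have e : (y - N + 2) * (y ^+ 2 + y - Rr + 1) - (x - N + 2) * (x ^+ 2 + x - Rr + 1)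
   = (y - x) * (x ^+ 2 + x - Rr + 1) + (y - N + 2) * ((y - x) * (y + x + 1)) by ring.
have p1 : 0 < (y - x) * (x ^+ 2 + x - Rr + 1) by apply: mulr_gt0.
have p2 : 0 <= (y - N + 2) * ((y - x) * (y + x + 1)).
  apply: mulr_ge0; first lra.
  apply: mulr_ge0; lra.
lra.
Qed.


Definition xs (lam : R) (k : nat) : R :=
  if k == 0%N then (lam + 1) * (r%:R - 3)
  else if k == 1%N then (lam ^+ 2 + lam - r%:R + 1) - (r%:R - 3)
  else if (k < r)%N then (r%:R - 3) + (lam ^+ 2 + lam - r%:R + 1)
  else lam ^+ 2 + lam - r%:R + 1.

Definition ofv (v : 'rV[R]_n) (i : nat) : R :=
  if insub i is Some k then v 0 k else 0.

Lemma ofvE (v : 'rV[R]_n) (k : 'I_n) : ofv v k = v 0 k.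
Proof. by rewrite /ofv valK. Qed.

Lemma mulnr2 (c : R) : c *+ (r - 2) = c * (r%:R - 2).
Proof. rewrite -natrB ?mulr_natr //; lia. Qed.
Lemma mulnr3 (c : R) : c *+ (n - r) = c * (n%:R - r%:R).
Proof. rewrite -natrB ?mulr_natr //; lia. Qed.

Lemma main_eig lam : n%:R - 2 <= lam ->
  (lam - n%:R + 2) * (lam ^+ 2 + lam - r%:R + 1) - (r%:R - 3) ^+ 2 = 0 ->
  eigenvalue (Gamma_adj R n r) lam.
Proof.
move=> hl hf.
have := hN; have := hR; have := hRN => h1 h2 h3.
have hS0 : 0 < lam ^+ 2 + lam - r%:R + 1 by nra.
have sA : \sum_(2 <= i < r) xs lam i = ((r%:R - 3) + (lam ^+ 2 + lam - r%:R + 1)) *+ (r - 2).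
  apply: sum_const => i hi; rewrite /xs.
  have -> : (i == 0%N) = false by lia.
  have -> : (i == 1%N) = false by lia.
  by have -> : (i < r)%N = true by lia.
have sB : \sum_(r <= i < n) xs lam i = (lam ^+ 2 + lam - r%:R + 1) *+ (n - r).
  apply: sum_const => i hi; rewrite /xs.
  have -> : (i == 0%N) = false by lia.
  have -> : (i == 1%N) = false by lia.
  by have -> : (i < r)%N = false by lia.
have s2 : \sum_(2 <= i < n) xs lam i = \sum_(2 <= i < r) xs lam i + \sum_(r <= i < n) xs lam i.
  by rewrite (big_cat_nat (n := r)) //; lia.
rewrite sA sB mulnr2 mulnr3 in s2.
apply/eigenvalueP; exists (\row_(k < n) xs lam k); last first.
  have hrn' : (r < n)%N by lia.
  apply/negP => /eqP /rowP /(_ (Ordinal hrn')); rewrite !mxE /xs /=.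
  have -> : (r == 0%N) = false by lia.
  have -> : (r == 1%N) = false by lia.
  rewrite ltnn => e; lra.
apply/rowP => j; rewrite mulA [RHS]mxE mxE.
case: j => j hj /=.
have [j0|jn0] := eqVneq j 0%N.
  rewrite j0 col0 sA mulnr2 /xs /=; lra.
have [j1|jn1] := eqVneq j 1%N.
  rewrite j1 col1 s2 /xs /=; lra.
rewrite colj; last by lia.
rewrite s2 /xs /= (negPf jn0) (negPf jn1).
case: (j < r)%N; lra.
Qed.


Lemma main_max lam mu : n%:R - 2 <= lam ->
  (lam - n%:R + 2) * (lam ^+ 2 + lam - r%:R + 1) - (r%:R - 3) ^+ 2 = 0 ->
  eigenvalue (Gamma_adj R n r) mu -> mu <= lam.
Proof.
move=> hl hf /eigenvalueP [v hv vnz].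
rewrite leNgt; apply/negP => hlm.
have := hN; have := hR; have := hRN => h1 h2 h3.
have hF : 0 < (mu - n%:R + 2) * (mu ^+ 2 + mu - r%:R + 1) - (r%:R - 3) ^+ 2.
  by have := fmono _ _ hl hlm; rewrite !fE hf.
have hm : 0 < mu + 1 by lra.
have vE : v = \row_(k < n) ofv v k by apply/rowP => k; rewrite mxE ofvE.
set x := ofv v.
have eqn : forall j, (j < n)%N -> \sum_(0 <= i < n) x i * Aent R r i j = mu * x j.
  move=> j hj; have := hv; move/rowP => /(_ (Ordinal hj)).
  by rewrite {1}vE mulA mxE -ofvE.
have e0 := eqn 0%N ltac:(lia); rewrite col0 in e0.
have e1 := eqn 1%N ltac:(lia); rewrite col1 in e1.
set SA := \sum_(2 <= i < r) x i in e0 e1 *.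
set SB := \sum_(r <= i < n) x i.
have s2 : \sum_(2 <= i < n) x i = SA + SB.
  by rewrite (big_cat_nat (n := r)) //; lia.
rewrite s2 in e1.
have hj : forall j, (2 <= j < n)%N ->
   (mu + 1) * x j = (if (j < r)%N then x 0%N else 0) + (x 1%N + SA + SB).
  move=> j hj; have := eqn j ltac:(lia); rewrite colj // s2.
  case: (j < r)%N => e; lra.
have sumA : (mu + 1) * SA = (x 0%N + (x 1%N + SA + SB)) *+ (r - 2).
  rewrite {1}/SA mulr_sumr; apply: sum_const => i hi.
  by rewrite hj; [have -> : (i < r)%N = true by lia|lia].
have sumB : (mu + 1) * SB = (x 1%N + SA + SB) *+ (n - r).
  rewrite {1}/SB mulr_sumr; apply: sum_const => i hi.
  rewrite hj; last by lia.
  by rewrite ltnNge (andP hi).1 add0r.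
  
rewrite mulnr2 in sumA; rewrite mulnr3 in sumB.
have E1 : (mu - n%:R + 2) * (x 1%N + SA + SB) = (r%:R - 3) * x 0%N by lra.
have e0' := congr1 (fun z => (mu + 1) * z) e0; simpl in e0'.
have E2 : (mu ^+ 2 + mu - r%:R + 1) * x 0%N = (r%:R - 3) * (x 1%N + SA + SB) by lra.
have Fx0 : ((mu - n%:R + 2) * (mu ^+ 2 + mu - r%:R + 1) - (r%:R - 3) ^+ 2) * x 0%N = 0.
  have := congr1 (fun z => (mu - n%:R + 2) * z) E2.
  have := congr1 (fun z => (r%:R - 3) * z) E1.
  simpl => a b; lra.
have FT : ((mu - n%:R + 2) * (mu ^+ 2 + mu - r%:R + 1) - (r%:R - 3) ^+ 2) * (x 1%N + SA + SB) = 0.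
  have := congr1 (fun z => (mu ^+ 2 + mu - r%:R + 1) * z) E1.
  have := congr1 (fun z => (r%:R - 3) * z) E2.
  simpl => a b; lra.
have x00 : x 0%N = 0.
  by move/eqP: Fx0; rewrite mulf_eq0 (gt_eqF hF) => /eqP.
have T0 : x 1%N + SA + SB = 0.
  by move/eqP: FT; rewrite mulf_eq0 (gt_eqF hF) => /eqP.
have x10 : x 1%N = 0.
  have : (mu + 1) * x 1%N = 0 by lra.
  by move/eqP; rewrite mulf_eq0 (gt_eqF hm) => /eqP.
have xj0 : forall j, (2 <= j < n)%N -> x j = 0.
  move=> j hj2; have := hj j hj2; rewrite x00 T0 addr0.
  have -> : (if (j < r)%N then (0:R) else 0) = 0 by case: (j < r)%N.
  by move/eqP; rewrite mulf_eq0 (gt_eqF hm) => /eqP.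
apply/negP: vnz; apply/negPn/eqP/rowP => k; rewrite [RHS]mxE -ofvE -/x.
case: k => k hk /=.
have [->|kn0] := eqVneq k 0%N; first exact: x00.
have [->|kn1] := eqVneq k 1%N; first exact: x10.
apply: xj0; lia.
Qed.

End S.

Theorem proposition1p9 (R : rcfType) (n r : nat) :
  (3 <= r)%N -> (r + 1 <= n)%N ->
  exists lam : R,
    is_index (Gamma_adj R n r) lam /\
    (root (f_poly R n r) lam /\
     (forall x : R, root (f_poly R n r) x -> x <= lam)) /\
    (n%:R - 2 <= lam /\ lam < n%:R - 1).
Proof.
move=> hr hrn.
have h3 : (4 : R) <= n%:R by rewrite ler_nat; lia.
have h2 : (3 : R) <= r%:R by rewrite ler_nat.
have h1 : (r%:R + 1 : R) <= n%:R by move: hrn; rewrite -(ler_nat R) natrD.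
have [lam /andP [hl1 hl2] hroot] :
    exists2 lam : R, n%:R - 2 <= lam <= n%:R - 1 & root (f_poly R n r) lam.
  apply: poly_ivt; first lra.
  rewrite !fE; apply/andP; split; nra.
have hf := rootP hroot; rewrite fE in hf.
have hlt : lam < n%:R - 1.
  rewrite lt_neqAle hl2 andbT; apply/eqP => e.
  have : 0 < (n%:R - 1 - n%:R + 2) * ((n%:R - 1) ^+ 2 + (n%:R - 1) - r%:R + 1)
              - (r%:R - 3) ^+ 2 :> R by nra.
  rewrite -e; lra.
exists lam; split; [split|split; [split|split]] => //.
- exact: main_eig.
- by move=> mu; apply: main_max.
- move=> x hx; rewrite leNgt; apply/negP => hlx.
  by have := @fmono R n r hr hrn _ _ hl1 hlx; rewrite (rootP hroot) (rootP hx) ltxx.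
Qed.
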